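(* Let $\mathcal{I}$ be an ideal on $\omega$ with $\mathrm{fin} \subseteq \mathcal{I}$. Fix a recursive injection $\sharp : \omega^{<\omega} \to \omega$, and for $f \in \omega^\omega$ let $e(f) \in \omega^\omega$ be the function $e(f)(n) = \sharp(f|_n)$. Suppose $T \subseteq \omega^\omega$ and $C : \omega^\omega \to [\omega]^\omega$ are such that (1) for every $f \in \omega^\omega$: $f \in T$ if and only if for all $g \in \omega^\omega$, $S(C(f), f, e(g)) \in \mathcal{I}$; (2) $C$ is injective and the image of $C$ is an $\mathcal{I}$-AD family. For $f \in \omega^\omega$ define $E(f) \in \omega^\omega$ by $E(f)(n) = f(n)$ if $f \in T$ and $n \in C(f)$, and $E(f)(n) = e(f)(n)$ otherwise. Then $\mathcal{E} = \{E(f) : f \in \omega^\omega\}$ is an $\mathcal{I}$-MED family. Moreover, if $\mathcal{I}$ and $T$ are Borel and $C$ is analytic, then $\mathcal{E}$ is analytic.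
   Context: $\mathrm{fin}$ is the ideal of finite subsets of $\omega$. For an ideal $\mathcal{I}$ on $\omega$, $\mathcal{I}^+ = \mathcal{P}(\omega)\setminus\mathcal{I}$ is the family of $\mathcal{I}$-positive sets. A family $\mathcal{A}$ is $\mathcal{I}$-AD if $\mathcal{A} \subseteq \mathcal{I}^+$ and $A \cap A' \in \mathcal{I}$ for all distinct $A, A' \in \mathcal{A}$. For functions $f,g$ and $X \subseteq \mathrm{dom}(f)\cap\mathrm{dom}(g)$, $S(X,f,g) = \{n \in X : f(n) = g(n)\}$. Functions $f,g \in \omega^\omega$ are $\mathcal{I}$-eventually different ($\mathcal{I}$-ED) if $\{n : f(n) = g(n)\} \in \mathcal{I}$. A set $\mathcal{E} \subseteq \omega^\omega$ is an $\mathcal{I}$-ED family if any two distinct members are $\mathcal{I}$-ED, and an $\mathcal{I}$-MED family ($\mathcal{I}$-maximal eventually different family) if moreover for every $h \in \omega^\omega$ there is $f \in \mathcal{E}$ such that $f,h$ are not $\mathcal{I}$-ED. Ideals are viewed as subsets of $2^\omega$ via characteristic functions when speaking of Borel/analytic. *)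

(* Defs.v *)
From HB Require Import structures.
From mathcomp Require Import all_boot all_order all_algebra.
From mathcomp Require Import all_classical all_reals topology measure.
Set Implicit Arguments. Unset Strict Implicit. Unset Printing Implicit Defensive.
Local Open Scope classical_set_scope.

(* Subsets of omega are represented by their characteristic functions
   nat -> bool (points of 2^omega). *)

Definition BaireSp : Type := {ptws nat -> nat}.
Definition CantorSp : Type := {ptws nat -> bool}.

Definition subsetb (X Y : nat -> bool) : Prop := forall n, X n -> Y n.
Definition unionb (X Y : nat -> bool) : nat -> bool := fun n => X n || Y n.
Definition interb (X Y : nat -> bool) : nat -> bool := fun n => X n && Y n.
Definition finite_nat (X : nat -> bool) : Prop := exists N, forall n, X n -> (n < N)%N.
Definition infinite_setb (X : nat -> bool) : Prop := forall N, exists n, (N <= n)%N /\ X n.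

Definition is_ideal (I : set (nat -> bool)) : Prop :=
  [/\ I (fun _ => false),
      (forall X Y, I Y -> subsetb X Y -> I X),
      (forall X Y, I X -> I Y -> I (unionb X Y)) &
      ~ I (fun _ => true)].

Definition contains_fin (I : set (nat -> bool)) : Prop :=
  forall X, finite_nat X -> I X.

Definition I_AD (I : set (nat -> bool)) (A : set (nat -> bool)) : Prop :=
  (forall X, A X -> ~ I X) /\
  (forall X Y, A X -> A Y -> X <> Y -> I (interb X Y)).

Definition Sagree (X : nat -> bool) (f g : nat -> nat) : nat -> bool :=
  fun n => X n && (f n == g n).

Definition I_ED (I : set (nat -> bool)) (f g : nat -> nat) : Prop :=
  I (fun n => f n == g n).

Definition I_ED_family (I : set (nat -> bool)) (E : set (nat -> nat)) : Prop :=
  forall f g, E f -> E g -> f <> g -> I_ED I f g.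

Definition I_MED_family (I : set (nat -> bool)) (E : set (nat -> nat)) : Prop :=
  I_ED_family I E /\ (forall h, exists2 f, E f & ~ I_ED I f h).

Definition restr (f : nat -> nat) (n : nat) : seq nat := mkseq f n.

Definition enc (code : seq nat -> nat) (f : nat -> nat) : nat -> nat :=
  fun n => code (restr f n).

Definition Emap (code : seq nat -> nat) (T : set (nat -> nat))
  (C : (nat -> nat) -> (nat -> bool)) (f : nat -> nat) : nat -> nat :=
  fun n => if `[< T f >] && C f n then f n else enc code f n.

Definition borel {X : topologicalType} (A : set X) : Prop :=
  <<s (@open X) >> A.

Definition analytic {X : topologicalType} (A : set X) : Prop :=
  A = set0 \/ exists g : BaireSp -> X, continuous g /\ range g = A.

Definition graph_fun (C : (nat -> nat) -> (nat -> bool)) : set (BaireSp * CantorSp) :=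
  [set p | C p.1 = p.2].

(* Main.v *)
Require Import Defs.
From HB Require Import structures.
From mathcomp Require Import all_boot all_order all_algebra.
From mathcomp Require Import all_classical all_reals topology measure.
Local Open Scope classical_set_scope.

Definition cyl {V : Type} (x : nat -> V) (m : nat) (y : nat -> V) : Prop :=
  forall k, (k < m)%N -> y k = x k.

Definition lcont {V : Type} (h : (nat -> nat) -> (nat -> V)) : Prop :=
  forall x n, exists m, forall y, cyl x m y -> h y n = h x n.

Lemma cyl_mono {V : Type} (x y : nat -> V) m m' : (m <= m')%N -> cyl x m' y -> cyl x m y.
Proof. move=> le h k km; apply: h; exact: leq_trans km le. Qed.

Definition cylF {V : Type} (x : nat -> V) : set_system (nat -> V) :=
  [set A | exists m, forall y, cyl x m y -> A y].

Instance cylF_filter {V : Type} (x : nat -> V) : Filter (cylF x).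
Proof.
split.
- by exists 0%N.
- move=> A B [m1 h1] [m2 h2]; exists (maxn m1 m2) => y hy; split.
  + by apply: h1; apply: cyl_mono hy; rewrite leq_maxl.
  + by apply: h2; apply: cyl_mono hy; rewrite leq_maxr.
- by move=> A B AB [m h]; exists m => y /h /AB.
Qed.

Section bridge.
Variable V : uniformType.
Hypothesis Vdisc : forall v : V, nbhs v [set v].

Lemma nbhs_cyl (x : {ptws nat -> V}) (A : set {ptws nat -> V}) :
  nbhs x A -> exists m, forall y, cyl x m y -> A y.
Proof.
have : cylF x --> x.
  apply/(@pointwise_cvgP nat V (cylF x) x (cylF_filter x)) => t B /= hB.
  exists t.+1 => y hy /=; rewrite hy //; exact: nbhs_singleton hB.
by move=> /(_ A) h /h.
Qed.

Lemma cyl_nbhs (x : {ptws nat -> V}) m : nbhs x (cyl x m).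
Proof.
have Fx : Filter (nbhs x) := @nbhs_filter _ x.
elim: m => [|m IH].
  by apply: filterS filterT => y _ k.
have h1 : nbhs x [set y : {ptws nat -> V} | y m = x m].
  have := @proj_continuous nat (fun _ => V) m x [set x m] (Vdisc (x m)).
  by [].
apply: filterS (filterI IH h1) => y [h2 h3] k; rewrite ltnS leq_eqVlt => /orP[/eqP->//|]; exact: h2.
Qed.
End bridge.

Lemma nat_disc (v : nat) : nbhs v [set v]. Proof. exact: discrete_set1. Qed.
Lemma bool_disc (v : bool) : nbhs v [set v]. Proof. exact: discrete_set1. Qed.

Section bridge2.
Variable V : uniformType.
Hypothesis Vdisc : forall v : V, nbhs v [set v].

Lemma lcont_continuous (h : {ptws nat -> nat} -> {ptws nat -> V}) :
  lcont h -> continuous h.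
Proof.
move=> hc x.
have Fx : Filter (nbhs x) := @nbhs_filter _ x.
apply/(@pointwise_cvgP nat V (h @ x) (h x) _) => t B /= hB.
have [m hm] := hc x t.
apply: (@filterS _ _ Fx (cyl x m)); last exact: (@cyl_nbhs _ nat_disc x m).
move=> y /hm /= ->.
exact: nbhs_singleton hB.
Qed.

Lemma continuous_lcont (h : {ptws nat -> nat} -> {ptws nat -> V}) :
  continuous h -> lcont h.
Proof.
move=> hc x n.
have : nbhs (x : {ptws nat -> nat}) [set y | h y n = h x n].
  apply: (hc x [set g : {ptws nat -> V} | g n = h x n]).
  have Fx : Filter (nbhs (h x)) := @nbhs_filter _ (h x).
  apply: filterS (@cyl_nbhs _ Vdisc (h x) n.+1) => y hy.
  exact: hy.
move/(@nbhs_cyl nat) => [m hm]; exists m => y /hm //.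
Qed.
End bridge2.

Lemma pair_lcont (g : BaireSp -> BaireSp * CantorSp) : continuous g ->
  lcont (fun x => (g x).1) /\ lcont (fun x => (g x).2).
Proof.
move=> gc; split.
- apply: (@continuous_lcont nat nat_disc (fun x : {ptws nat -> nat} => (g x).1 : {ptws nat -> nat})) => x.
  apply: continuous_comp; first exact: gc.
  exact: cvg_fst.
- apply: (@continuous_lcont bool bool_disc (fun x : {ptws nat -> nat} => (g x).2 : {ptws nat -> bool})) => x.
  apply: continuous_comp; first exact: gc.
  exact: cvg_snd.
Qed.

Lemma open_cyl (U : set BaireSp) : open U -> forall x, U x -> exists m, forall y, cyl x m y -> U y.
Proof.
move=> oU x Ux; apply: (@nbhs_cyl nat).
by rewrite openE in oU; apply: oU.
Qed.


Definition closedc (F : set (nat -> nat)) : Prop :=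
  forall y, (forall m, exists z, F z /\ cyl y m z) -> F y.

Definition an (A : set (nat -> nat)) : Prop :=
  A = set0 \/ exists h : (nat -> nat) -> (nat -> nat), lcont h /\ range h = A.

Lemma cyl_comp {V : Type} (g : (nat -> nat) -> (nat -> V)) : lcont g ->
  forall x m, exists m', forall y, cyl x m' y -> cyl (g x) m (g y).
Proof.
move=> gc x; elim=> [|m [m1 h1]]; first by exists 0%N => y _ k.
have [m2 h2] := gc x m.
exists (maxn m1 m2) => y hy k; rewrite ltnS leq_eqVlt => /orP[/eqP->|km].
  by apply: h2; apply: cyl_mono hy; rewrite leq_maxr.
by apply: h1 => //; apply: cyl_mono hy; rewrite leq_maxl.
Qed.

Lemma lcont_comp {V : Type} (g : (nat -> nat) -> (nat -> nat)) (h : (nat -> nat) -> (nat -> V)) :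
  lcont g -> lcont h -> lcont (fun x => h (g x)).
Proof.
move=> gc hc x n; have [m hm] := hc (g x) n; have [m' hm'] := @cyl_comp _ g gc x m.
by exists m' => y /hm' /hm.
Qed.

Lemma lcont_id : lcont (fun x : nat -> nat => x).
Proof. by move=> x n; exists n.+1 => y; apply. Qed.

Section retr.
Variable F : set (nat -> nat).
Hypothesis hF : closedc F.
Variable z0 : nat -> nat.
Hypothesis Fz0 : F z0.

Definition ext (p : nat -> nat) n := exists z, F z /\ cyl p n z.
Definition upd (p : nat -> nat) n (v : nat) := fun k => if k == n then v else p k.
Definition step p n a :=
  if `[< ext (upd p n a) n.+1 >] then a else xget 0%N (fun v => ext (upd p n v) n.+1).
Fixpoint rf (x : nat -> nat) (n : nat) : nat -> nat :=
  match n with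
  | 0 => fun _ => 0%N
  | n'.+1 => upd (rf x n') n' (step (rf x n') n' (x n'))
  end.
Definition rr x n := rf x n.+1 n.

Lemma rf_ext x n : ext (rf x n) n.
Proof.
elim: n => [|n [z [Fz hz]]]; first by exists z0; split => // k.
rewrite /= /step; case: asboolP => // _.
apply: (@xgetPex _ 0%N (fun v => ext (upd (rf x n) n v) n.+1)).
exists (z n); exists z; split => // k; rewrite ltnS leq_eqVlt /upd => /orP[/eqP->|kn].
  by rewrite eqxx.
by rewrite ltn_eqF // hz.
Qed.

Lemma rf_stable x n k : (k < n)%N -> rf x n k = rr x k.
Proof.
elim: n => [//|n IH]; rewrite ltnS leq_eqVlt => /orP[/eqP->//|kn].
by rewrite /= {1}/upd ltn_eqF // IH.
Qed.

Lemma rr_in x : F (rr x).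
Proof.
apply: hF => m; have [z [Fz hz]] := rf_ext x m.
by exists z; split => // k km; rewrite hz // rf_stable.
Qed.

Lemma rf_cont x y n : cyl x n y -> rf x n = rf y n.
Proof.
elim: n => [//|n IH] hy /=.
rewrite IH; last by apply: cyl_mono hy.
by rewrite (hy n).
Qed.

Lemma rr_lcont : lcont rr.
Proof. by move=> x n; exists n.+1 => y hy; rewrite /rr (rf_cont _ _ _ hy). Qed.

Lemma rr_fix y : F y -> rr y = y.
Proof.
move=> Fy.
have H : forall n, rf y n = fun k => if (k < n)%N then y k else 0%N.
  elim=> [|n IH] /=; first by [].
  have -> : step (rf y n) n (y n) = y n.
    rewrite /step asboolT //; exists y; split => // k.
    rewrite /upd IH ltnS leq_eqVlt => /orP[/eqP->|kn]; first by rewrite eqxx.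
    by rewrite ltn_eqF // kn.
  apply: funext => k; rewrite /upd IH.
  case: (ltngtP k n) => [kn|kn|->]; last by rewrite ltnSn.
    by rewrite ltnS ltnW.
  by rewrite ltnS leqNgt kn.
by apply: funext => n; rewrite /rr H ltnSn.
Qed.

Lemma retraction : exists r, lcont r /\ range r = F.
Proof.
exists rr; split; first exact: rr_lcont.
apply/seteqP; split => [_ [x _ <-]|y Fy]; first exact: rr_in.
by exists y => //; exact: rr_fix.
Qed.
End retr.

Lemma an_closed F : closedc F -> an F.
Proof.
move=> hF; case: (pselect (exists z, F z)) => [[z Fz]|nF].
  by right; exact: (@retraction F hF z Fz).
by left; apply/seteqP; split => // x Fx; apply: nF; exists x.
Qed.

Lemma an_image A (h : (nat -> nat) -> (nat -> nat)) : an A -> lcont h -> an (h @` A).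
Proof.
move=> [->|[g [gc <-]]] hc; first by left; rewrite image_set0.
right; exists (fun x => h (g x)); split; first exact: lcont_comp.
apply/seteqP; split => [_ [x _ <-]|_ [_ [x _ <-] <-]]; first by exists (g x) => //; exists x.
by exists x.
Qed.


Lemma an_bigcup (A : nat -> set (nat -> nat)) : (forall i, an (A i)) -> an (\bigcup_i A i).
Proof.
move=> hA.
case: (pselect (exists i x, A i x)) => [[i0 [x0 Ax0]]|nA]; last first.
  by left; apply/seteqP; split => // x [i _ Aix]; apply: nA; exists i, x.
have [h0 [h0c h0r]] : exists h, lcont h /\ range h = A i0.
  by case: (hA i0) => // A0; rewrite A0 in Ax0.
have : forall i, exists h, lcont h /\ (range h `<=` \bigcup_i A i) /\
    ((exists x, A i x) -> range h = A i).
  move=> i; case: (pselect (exists x, A i x)) => [[x Ax]|nAi].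
    case: (hA i) => [A0|[h [hc hr]]]; first by rewrite A0 in Ax.
    exists h; split => //; split => [|_ //].
    by rewrite hr => y Ay; exists i.
  exists h0; split => //; split => [|[x Ax]]; last by exfalso; apply: nAi; exists x.
  by rewrite h0r => y Ay; exists i0.
move=> /choice [H hH].
right; exists (fun y => H (y 0%N) (fun k => y k.+1)); split.
  move=> x n; have [m hm] := (hH (x 0%N)).1 (fun k => x k.+1) n.
  exists m.+1 => y hy; rewrite (hy 0%N) //; apply: hm => k km; apply: hy.
  by rewrite ltnS.
apply/seteqP; split => [_ [y _ <-]|x [i _ Aix]].
  by apply: (hH (y 0%N)).2.1; exists (fun k => y k.+1).
have : range (H i) x by rewrite (hH i).2.2 //; exists x.
move=> [z _ <-].
by exists (fun k => if k is k'.+1 then z k' else i).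
Qed.

Definition proj_i (i : nat) (y : nat -> nat) : nat -> nat := fun k => y (pickle (i, k)).

Lemma proj_lcont i : lcont (proj_i i).
Proof. by move=> x n; exists (pickle (i, n)).+1 => y hy; rewrite /proj_i hy. Qed.

Lemma an_bigcap (A : nat -> set (nat -> nat)) : (forall i, an (A i)) -> an (\bigcap_i A i).
Proof.
move=> hA.
case: (pselect (exists i, A i = set0)) => [[i Ai]|nA].
  by left; apply/seteqP; split => // x /(_ i I); rewrite Ai.
have : forall i, exists h, lcont h /\ range h = A i.
  by move=> i; case: (hA i) => // Ai; exfalso; apply: nA; exists i.
move=> /choice [H hH].
pose G i y := H i (proj_i i y).
have Gc : forall i, lcont (G i).
  by move=> i; apply: lcont_comp; [exact: proj_lcont | exact: (hH i).1].
pose F := [set y | forall i, G i y = G 0%N y].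
have cF : closedc F.
  move=> y hy i; apply: funext => n.
  have [m1 h1] := Gc i y n; have [m2 h2] := Gc 0%N y n.
  have [z [Fz hz]] := hy (maxn m1 m2).
  rewrite -(h1 z); last by apply: cyl_mono hz; rewrite leq_maxl.
  rewrite -(h2 z); last by apply: cyl_mono hz; rewrite leq_maxr.
  by rewrite Fz.
suff -> : \bigcap_i A i = G 0%N @` F by apply: an_image; [exact: an_closed|exact: Gc].
apply/seteqP; split => [x hx|_ [y Fy <-] i _].
  have : forall i, exists z, H i z = x.
    by move=> i; have := hx i I; rewrite -(hH i).2 => -[z _ <-]; exists z.
  move=> /choice [Z hZ].
  pose y n := if (unpickle n : option (nat * nat)) is Some p then Z p.1 p.2 else 0%N.
  have py : forall i, proj_i i y = Z i.
    by move=> i; apply: funext => k; rewrite /proj_i /y pickleK.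
  have Gy : forall i, G i y = x by move=> i; rewrite /G py hZ.
  exists y; last exact: Gy.
  by rewrite /F /= => i; rewrite !Gy.
by rewrite -(Fy i) -(hH i).2; exists (proj_i i y).
Qed.

Lemma an_setT : an setT.
Proof.
right; exists (fun x => x); split; first exact: lcont_id.
by apply/seteqP; split => // x _; exists x.
Qed.

Definition cyls (s : seq nat) (y : nat -> nat) := forall k, (k < size s)%N -> y k = nth 0%N s k.

Lemma an_open (U : set BaireSp) : open U -> an U /\ an (~` U).
Proof.
move=> oU; split; last first.
  apply: an_closed => y hy Uy.
  have [m hm] := @open_cyl U oU y Uy.
  have [z [nUz hz]] := hy m.
  by apply: nUz; apply: hm.
pose C i := [set y | exists s, unpickle i = Some s /\ (forall y', cyls s y' -> U y') /\ cyls s y].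
suff -> : U = \bigcup_i C i.
  apply: an_bigcup => i; apply: an_closed => y hy.
  have [z [[s [hs [hU hz]]] _]] := hy 0%N.
  exists s; split => //; split => // k ks.
  have [z' [[s' [hs' [_ hz']]] hyz]] := hy k.+1.
  move: hs'; rewrite hs => -[ss]; subst s'.
  by rewrite -hz' // hyz.
apply/seteqP; split => [x Ux|x [i _ [s [_ [hU hs]]]]]; last exact: hU.
have [m hm] := @open_cyl U oU x Ux.
exists (pickle (mkseq x m)) => //; exists (mkseq x m); split; first by rewrite pickleK.
split; last by move=> k; rewrite size_mkseq => km; rewrite nth_mkseq.
move=> y hy; apply: hm => k km; rewrite hy ?size_mkseq ?nth_mkseq //.
Qed.

Definition Kan (A : set BaireSp) := an A /\ an (~` A).

Lemma borel_an (A : set BaireSp) : borel A -> an A.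
Proof.
move=> bA; suff : Kan A by case.
apply: (smallest_sub _ _ bA); last by move=> U oU; exact: an_open.
split.
- split; first by left.
  by rewrite setC0; exact: an_setT.
- by move=> B [h1 h2]; rewrite /Kan setTD setCK; split.
- move=> B hB; split; first by apply: an_bigcup => i; case: (hB i).
  by rewrite setC_bigcup; apply: an_bigcap => i; case: (hB i).
Qed.

Lemma borel_preimage (phi : BaireSp -> BaireSp) (B : set BaireSp) :
  continuous phi -> borel B -> borel (phi @^-1` B).
Proof.
move=> pc bB.
have [s0 sC sU] := smallest_sigma_algebra setT (@open BaireSp).
apply: (@smallest_sub _ _ _ (fun B : set BaireSp => borel (phi @^-1` B)) _ _ B bB); last first.
  move=> U oU; apply: sub_sigma_algebra.
  by move/continuousP: pc; apply.
split.
- by rewrite preimage_set0; exact: s0.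
- move=> C hC; rewrite setTD -preimage_setC -setTD; exact: sC.
- move=> F hF; rewrite preimage_bigcup; exact: sU.
Qed.


Section ideal.
Variable I : set (nat -> bool).
Hypothesis hI : is_ideal I.

Lemma Isub (X Y : nat -> bool) : I Y -> (forall n, X n -> Y n) -> I X.
Proof. by case: hI => _ h _ _ IY XY; apply: (h X Y). Qed.

Lemma Iun (X Y : nat -> bool) : I X -> I Y -> I (unionb X Y).
Proof. by case: hI => _ _ h _; apply: h. Qed.

Lemma I0 : I (fun _ => false).
Proof. by case: hI. Qed.

Lemma Icover (X Y1 Y2 Y3 Y4 : nat -> bool) : I Y1 -> I Y2 -> I Y3 -> I Y4 ->
  (forall n, X n -> [|| Y1 n, Y2 n, Y3 n | Y4 n]) -> I X.
Proof.
move=> h1 h2 h3 h4 hX.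
apply: (@Isub X (unionb Y1 (unionb Y2 (unionb Y3 Y4)))); last first.
  by move=> n /hX; rewrite /unionb.
by apply: Iun => //; apply: Iun => //; apply: Iun.
Qed.

Lemma Icond (b : bool) (X : nat -> bool) : (b -> I X) -> I (fun n => b && X n).
Proof.
case: b => [h|_]; first by apply: (@Isub _ X) => //; exact: h.
by apply: (@Isub _ (fun _ => false)) => //; exact: I0.
Qed.
End ideal.

Lemma enc_eq code f g n : injective code -> enc code f n = enc code g n ->
  forall k, (k < n)%N -> f k = g k.
Proof.
move=> ci /ci e k kn.
by rewrite -(nth_mkseq 0%N f kn) -(nth_mkseq 0%N g kn); rewrite /restr in e; rewrite e.
Qed.

Lemma enc_lcont code : lcont (enc code).
Proof.
move=> x n; exists n => y hy; rewrite /enc /restr; congr code.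
rewrite /mkseq; apply/eq_in_map => k; rewrite mem_iota add0n => /andP[_ kn].
exact: hy.
Qed.

Lemma enc_fin code f g : injective code -> f <> g ->
  finite_nat (fun n => enc code f n == enc code g n).
Proof.
move=> ci fg.
have [d fd] : exists d, f d <> g d.
  apply: contrapT => nd; apply: fg; apply: funext => d.
  by apply: contrapT => ne; apply: nd; exists d.
exists d.+1 => n /eqP /(@enc_eq code f g n ci) e; rewrite ltnNge; apply/negP => dn.
by apply: fd; apply: e.
Qed.

Section main.
Variables (I : set (nat -> bool)) (code : seq nat -> nat)
  (T : set (nat -> nat)) (C : (nat -> nat) -> (nat -> bool)).
Hypotheses (hI : is_ideal I) (hfin : contains_fin I) (ci : injective code)
  (hT : forall f, T f <-> (forall g, I (Sagree (C f) f (enc code g))))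
  (Ci : injective C) (AD : I_AD I (range C)).

Lemma ED_part f g : f <> g ->
  I (fun n => Emap code T C f n == Emap code T C g n).
Proof.
move=> fg.
apply: (@Icover I hI _
  (fun n => `[< T f >] && Sagree (C f) f (enc code g) n)
  (fun n => `[< T g >] && Sagree (C g) g (enc code f) n)
  (fun n => (`[< T f >] && `[< T g >]) && interb (C f) (C g) n)
  (fun n => enc code f n == enc code g n)).
- by apply: Icond => // /asboolP /hT.
- by apply: Icond => // /asboolP /hT.
- apply: Icond => // _; apply: AD.2; [by exists f|by exists g|].
  by move/Ci.
- by apply: hfin; apply: enc_fin.
move=> n; rewrite /Emap /Sagree /interb.
case: asboolP => Tf; case: asboolP => Tg; case: (C f n); case: (C g n) => /= /eqP e;
  rewrite ?e ?eqxx ?orbT //.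
Qed.

Lemma max_part h : exists2 f, range (Emap code T C) f & ~ I_ED I f h.
Proof.
case: (pselect (T h)) => Th.
  exists (Emap code T C h); first by exists h.
  move=> Ie; apply: (AD.1 (C h)); first by exists h.
  apply: (@Isub I hI _ _ Ie) => n Chn.
  by rewrite /Emap asboolT // Chn eqxx.
have : ~ (forall g, I (Sagree (C h) h (enc code g))) by rewrite -hT.
move=> /existsNP [g ng].
exists (Emap code T C g); first by exists g.
move=> Ie; apply: ng.
apply: (@Icover I hI _
  (fun n => Emap code T C g n == h n)
  (fun n => `[< T g >] && interb (C h) (C g) n)
  (fun _ => false) (fun _ => false)) => //.
- apply: Icond => // /asboolP Tg; apply: AD.2; [by exists h|by exists g|].
  by move/Ci => e; apply: Th; rewrite e.
- exact: I0.
- exact: I0.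
move=> n; rewrite /Sagree /Emap /interb.
case: asboolP => Tg; case: (C g n); case: (C h n) => //= /eqP e;
  rewrite ?e ?eqxx ?orbT //.
Qed.

End main.

Lemma an_setU (A B : set (nat -> nat)) : an A -> an B -> an (A `|` B).
Proof.
move=> hA hB.
have -> : A `|` B = \bigcup_i (if i is 0 then A else B).
  apply/seteqP; split => [x [Ax|Bx]|x [[|i] _ h]]; [by exists 0%N|by exists 1%N|by left|by right].
by apply: an_bigcup => -[|i].
Qed.

Lemma analytic_part (code : seq nat -> nat)
  (T : set (nat -> nat)) (C : (nat -> nat) -> (nat -> bool)) :
  borel (T : set BaireSp) -> analytic (graph_fun C) ->
   analytic (range (Emap code T C) : set BaireSp).
Proof.
move=> bT [G0|[g [gc rg]]].
  by have : graph_fun C ((fun _ => 0%N), C (fun _ => 0%N)) by []; rewrite G0.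
have [g1c g2c] := @pair_lcont g gc.
pose g1 y := (g y).1; pose g2 y := (g y).2.
pose mixg (y : nat -> nat) : nat -> nat := fun n => if g2 y n then g1 y n else enc code (g1 y) n.
have ec : lcont (fun y => enc code (g1 y)) by apply: lcont_comp => //; exact: enc_lcont.
have mc : lcont mixg.
  move=> x n; have [m1 h1] := g1c x n; have [m2 h2] := g2c x n; have [m3 h3] := ec x n.
  exists (maxn m1 (maxn m2 m3)) => y hy; rewrite /mixg /g1 /g2.
  rewrite (h1 y) ?(h2 y) ?(h3 y) //; apply: cyl_mono hy.
  - by rewrite (leq_trans (leq_maxr m2 m3)) // leq_maxr.
  - by rewrite (leq_trans (leq_maxl m2 m3)) // leq_maxr.
  - by rewrite leq_maxl.
have cg1 : continuous (g1 : BaireSp -> BaireSp).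
  exact: (@lcont_continuous nat (fun y : {ptws nat -> nat} => g1 y : {ptws nat -> nat})).
have bD : borel ((g1 : BaireSp -> BaireSp) @^-1` T) by exact: borel_preimage.
have bnT : borel (~` T : set BaireSp).
  have [_ sC _] := smallest_sigma_algebra setT (@open BaireSp).
  by rewrite -setTD; exact: sC.
have -> : range (Emap code T C) = mixg @` (g1 @^-1` T) `|` enc code @` (~` T).
  apply/seteqP; split => [_ [f _ <-]|_ [[y Ty <-]|[f nTf <-]]].
  - case: (pselect (T f)) => Tf; last first.
      by right; exists f => //; apply: funext => n; rewrite /Emap asboolF.
    have : range g (f, C f) by rewrite rg.
    move=> [y _ gy]; left; exists y; first by rewrite /preimage /= /g1 gy.
    apply: funext => n; rewrite /mixg /g1 /g2 gy /Emap asboolT //.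
  - have : graph_fun C (g y) by rewrite -rg; exists y.
    rewrite /graph_fun /= => Cy.
    exists (g1 y) => //; apply: funext => n.
    by rewrite /mixg /Emap asboolT // /g2 -Cy.
  - by exists f => //; apply: funext => n; rewrite /Emap asboolF.
have : an (mixg @` (g1 @^-1` T) `|` enc code @` (~` T)).
  apply: an_setU; apply: an_image.
  - exact: borel_an.
  - exact: mc.
  - exact: borel_an.
  - exact: enc_lcont.
move=> [->|[h [hc hr]]]; first by left.
right; exists h; split => //.
exact: (@lcont_continuous nat h).
Qed.

Theorem lemma3p1 (I : set (nat -> bool)) (code : seq nat -> nat)
  (T : set (nat -> nat)) (C : (nat -> nat) -> (nat -> bool)) :
  is_ideal I -> contains_fin I ->
  injective code ->
  (forall f, infinite_setb (C f)) ->
  (forall f, T f <-> (forall g, I (Sagree (C f) f (enc code g)))) ->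
  injective C ->
  I_AD I (range C) ->
  I_MED_family I (range (Emap code T C)) /\
  (borel (I : set CantorSp) -> borel (T : set BaireSp) -> analytic (graph_fun C) ->
   analytic (range (Emap code T C) : set BaireSp)).
Proof.
move=> hI hfin ci _ hT Ci AD; split; last by move=> _; exact: analytic_part.
split; last exact: max_part.
move=> _ _ [f _ <-] [g _ <-] ne.
apply: ED_part => // fg; apply: ne; by rewrite fg.
Qed.
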